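(* Let $M$ be a multiplicity free object of a nonzero finite abelian category $\mathcal C$ over $\mathbb F$. Then $M$ is rigid if and only if for every $\sigma\in\mathrm{JH}(M)$ there is an extension path in the radical filtration of length $\ell\ell(M)-1-d^M_{\mathrm{rad}}(\sigma)$ beginning with $\sigma$. Also, $M$ is rigid if and only if for every $\sigma\in\mathrm{JH}(M)$ there is an extension path in the socle filtration of length $\ell\ell(M)-1-d_M^{\mathrm{soc}}(\sigma)$ ending with $\sigma$.
   Context: $\mathcal C$ is an $\mathbb F$-linear abelian category all of whose objects have finite length. Radical filtration: $\mathrm{rad}^0M=M$, $\mathrm{rad}^nM=\mathrm{rad}(\mathrm{rad}^{n-1}M)$; socle filtration: $\mathrm{soc}_{-1}M=0$, $\mathrm{soc}_nM$ = preimage of $\mathrm{soc}(M/\mathrm{soc}_{n-1}M)$. The Loewy length $\ell\ell(M)$ is the common length of these filtrations (number of nonzero graded pieces). $M$ is rigid if $\mathrm{rad}^nM=\mathrm{soc}_{\ell\ell(M)-n-1}M$ for all $n$. For $M$ multiplicity free and $\sigma\in\mathrm{JH}(M)$, $d^M_{\mathrm{rad}}(\sigma)$ (resp. $d_M^{\mathrm{soc}}(\sigma)$) is the unique $n$ with $\sigma$ a constituent of $\mathrm{rad}^nM/\mathrm{rad}^{n+1}M$ (resp. $\mathrm{soc}_nM/\mathrm{soc}_{n-1}M$). $\sigma$ points to $\sigma'$ if the subquotient of $M$ which is an extension $0\to\sigma'\to X\to\sigma\to0$ is nonsplit; for a filtration $\mathscr F$, $\sigma$ $\mathscr F$-points to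 $\sigma'$ if moreover the filtration induced by $\mathscr F$ on $X$ has exactly two nonzero graded pieces. An extension path in $\mathscr F$ of length $n$ is a sequence $\sigma_0\to\dots\to\sigma_n$ with each $\sigma_k$ $\mathscr F$-pointing to $\sigma_{k+1}$; it begins with $\sigma_0$ and ends with $\sigma_n$. *)

(* Defs.v *)
(* A finite abelian category over a field F is equivalent to
   the category of finite-dimensional modules over a finite-dimensional
   F-algebra.  We model the object M as the module F^n (row vectors
   'rV[F]_n) on which the algebra acts through the matrices in the list As
   (generators of the image of the algebra in 'M[F]_n).  Submodules of M are
   row spaces (square matrices, %MS) stable under all A in As. *)
From HB Require Import structures.
From mathcomp Require Import all_boot all_order all_algebra.
Set Implicit Arguments.
Unset Strict Implicit.
Unset Printing Implicit Defensive.
Import GRing.Theory.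
Local Open Scope ring_scope.

Section Defs.
Variables (F : fieldType) (n : nat) (As : seq 'M[F]_n).

Definition submod (U : 'M[F]_n) : bool := all (fun A => (U *m A <= U)%MS) As.

Definition simple_sq (U V : 'M[F]_n) : Prop :=
  [/\ submod U, submod V, (U <= V)%MS, (\rank U < \rank V)%N &
      forall W, submod W -> (U <= W <= V)%MS -> (W == U)%MS \/ (W == V)%MS].

(* V1/U1 is isomorphic (as a module) to V2/U2: the isomorphism is induced by
   a linear map f : F^n -> F^n *)
Definition iso_sq (U1 V1 U2 V2 : 'M[F]_n) : Prop :=
  exists f : 'M[F]_n,
    [/\ (V1 *m f <= V2)%MS, (U1 *m f <= U2)%MS, (V2 <= V1 *m f + U2)%MS,
        (V1 :&: kermx (f *m cokermx U2) <= U1)%MS &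
        forall A, A \in As -> (V1 *m (A *m f - f *m A) <= U2)%MS].

Definition mult_free : Prop :=
  exists (k : nat) (c : nat -> 'M[F]_n),
    [/\ (c 0%N == (0 : 'M[F]_n))%MS, (c k == 1%:M)%MS,
        (forall i, (i < k)%N -> simple_sq (c i) (c i.+1)) &
        forall i j, (i < k)%N -> (j < k)%N ->
          iso_sq (c i) (c i.+1) (c j) (c j.+1) -> i = j].

(* R = rad N : intersection of the maximal submodules of the submodule N *)
Definition is_rad (N R : 'M[F]_n) : Prop :=
  [/\ submod R, (R <= N)%MS,
      (forall W, simple_sq W N -> (R <= W)%MS) &
      exists Ws : seq 'M[F]_n, (forall W, W \in Ws -> simple_sq W N) /\
        ((\bigcap_(W <- Ws) W) :&: N <= R)%MS].

(* X/U = soc(N/U), i.e. X is the preimage in N of the socle of N/U *)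
Definition is_soc_over (U N X : 'M[F]_n) : Prop :=
  [/\ submod X, (U <= X <= N)%MS,
      (forall W, simple_sq U W -> (W <= N)%MS -> (W <= X)%MS) &
      exists Ws : seq 'M[F]_n,
        (forall W, W \in Ws -> simple_sq U W /\ (W <= N)%MS) /\
        (X <= U + \sum_(W <- Ws) W)%MS].

(* R k = rad^k M *)
Definition rad_filt (R : nat -> 'M[F]_n) : Prop :=
  (R 0%N == 1%:M)%MS /\ forall k, is_rad (R k) (R k.+1).

(* T k = soc_{k-1} M  (so T 0 = soc_{-1} M = 0) *)
Definition soc_filt (T : nat -> 'M[F]_n) : Prop :=
  (T 0%N == (0 : 'M[F]_n))%MS /\ forall k, is_soc_over (T k) 1%:M (T k.+1).

Definition loewy_length (R : nat -> 'M[F]_n) (L : nat) : Prop :=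
  (R L == (0 : 'M[F]_n))%MS /\ forall k, (k < L)%N -> ~~ (R k == (0 : 'M[F]_n))%MS.

(* rad^k M = soc_{L-k-1} M for all k *)
Definition rigid (R T : nat -> 'M[F]_n) (L : nat) : Prop :=
  forall k, (k <= L)%N -> (R k == T (L - k)%N)%MS.

Definition constituent (A B U V : 'M[F]_n) : Prop :=
  exists U' V', simple_sq U' V' /\ (A <= U')%MS /\ (V' <= B)%MS /\
    iso_sq U' V' U V.

(* sigma1 = V1/U1 points to sigma2 = V2/U2 inside the subquotient Y/X of M,
   with moreover the filtration (hi k, lo k) (graded piece hi k / lo k,
   k < L) inducing exactly two nonzero graded pieces on Y/X *)
Definition fpoints (hi lo : nat -> 'M[F]_n) (L : nat)
    (U1 V1 U2 V2 : 'M[F]_n) : Prop :=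
  exists X W Y : 'M[F]_n,
    [/\ [&& submod X, submod W, submod Y & (X <= W <= Y)%MS],
        iso_sq X W U2 V2, iso_sq W Y U1 V1,
        ~ (exists W', [/\ submod W', (X <= W' <= Y)%MS,
                          (W' :&: W <= X)%MS & (Y <= W' + W)%MS]) &
        count (fun k => ~~ ((hi k :&: Y) + X <= (lo k :&: Y) + X)%MS)
              (iota 0 L) = 2%N].

Definition rad_points (R : nat -> 'M[F]_n) L :=
  fpoints R (fun k => R k.+1) L.
Definition soc_points (T : nat -> 'M[F]_n) L :=
  fpoints (fun k => T k.+1) T L.

Definition ext_path (pts : 'M[F]_n -> 'M[F]_n -> 'M[F]_n -> 'M[F]_n -> Prop)
    (m : nat) (p : nat -> 'M[F]_n * 'M[F]_n) : Prop :=
  (forall k, (k <= m)%N -> simple_sq (p k).1 (p k).2) /\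
  (forall k, (k < m)%N -> pts (p k).1 (p k).2 (p k.+1).1 (p k.+1).2).

End Defs.

(* Main.v *)
Require Import Defs.
From HB Require Import structures.
From mathcomp Require Import all_boot all_order all_algebra.
From Stdlib Require Classical_Prop.
From mathcomp Require Import zify.
Set Implicit Arguments.
Unset Strict Implicit.
Unset Printing Implicit Defensive.
Import GRing.Theory.
Local Open Scope ring_scope.

Ltac ms_ n :=
  lazymatch n with
  | O => fail
  | S ?m =>
   first [ apply: submx_refl
   | lazymatch goal with |- is_true (_ && _) => apply/andP; split; ms_ n end
   | apply: submx1 | apply: sub0mx
   | match goal with
     | |- is_true (_ <= (_ :&: _))%MS => rewrite sub_capmx; apply/andP; split; ms_ n
     | |- is_true ((_ + _) <= _)%MS => rewrite addsmx_sub; apply/andP; split; ms_ n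
     end
   | match goal with
     | |- is_true ((?A :&: ?B) <= _)%MS =>
         first [ apply: (submx_trans (capmxSl A B)); ms_ m
               | apply: (submx_trans (capmxSr A B)); ms_ m ]
     end
   | match goal with
     | |- is_true (_ <= (?A + ?B))%MS =>
         first [ apply: (submx_trans _ (addsmxSl A B)); ms_ m
               | apply: (submx_trans _ (addsmxSr A B)); ms_ m ]
     end
   | match goal with
     | H : is_true (?X <= _)%MS |- is_true (?X <= _)%MS => apply: (submx_trans H); ms_ m
     end ]
  end.
Ltac ms := ms_ constr:(4%N).
Ltac mse := apply/andP; split; ms.

Section Lat.
Variables (F : fieldType) (n : nat) (As : seq 'M[F]_n).
Local Notation sm := (submod As).
Implicit Types U V W X Y Z A B C : 'M[F]_n.

Lemma smP U : reflect (forall A, A \in As -> (U *m A <= U)%MS) (sm U).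
Proof. exact: allP. Qed.

Lemma smA U A : sm U -> A \in As -> (U *m A <= U)%MS.
Proof. by move/smP; apply. Qed.

Lemma sm0 : sm 0.
Proof. by apply/smP => A _; rewrite mul0mx sub0mx. Qed.

Lemma sm1 : sm 1%:M.
Proof. by apply/smP => A _; rewrite submx1. Qed.

Lemma smD U V : sm U -> sm V -> sm (U + V)%MS.
Proof.
move=> /smP hU /smP hV; apply/smP => A hA.
rewrite addsmxMr addsmxS //; [exact: hU|exact: hV].
Qed.

Lemma smI U V : sm U -> sm V -> sm (U :&: V)%MS.
Proof.
move=> /smP hU /smP hV; apply/smP => A hA.
rewrite sub_capmx; apply/andP; split.
  exact: submx_trans (submxMr _ (capmxSl _ _)) (hU _ hA).
exact: submx_trans (submxMr _ (capmxSr _ _)) (hV _ hA).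
Qed.

Lemma sm_eq U V : (U == V)%MS -> sm U -> sm V.
Proof.
move=> /andP[uv vu] /smP hU; apply/smP => A hA.
exact: submx_trans (submxMr _ vu) (submx_trans (hU _ hA) uv).
Qed.

Lemma rank_lt_sub U V : (U <= V)%MS -> (\rank U < \rank V)%N = ~~ (V <= U)%MS.
Proof. by move=> uv; rewrite (ltn_leqif (mxrank_leqif_sup uv)). Qed.

Lemma simpleP U V : simple_sq As U V ->
  [/\ sm U, sm V, (U <= V)%MS, ~~ (V <= U)%MS &
      forall W, sm W -> (U <= W)%MS -> (W <= V)%MS -> (W <= U)%MS \/ (V <= W)%MS].
Proof.
case=> su sv uv r h; split => //; first by rewrite -rank_lt_sub.
move=> W sW uw wv; case: (h W sW); first by rewrite uw wv.
  by move=> /andP[]; left.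
by move=> /andP[]; right.
Qed.

Lemma simpleI U V : sm U -> sm V -> (U <= V)%MS -> ~~ (V <= U)%MS ->
  (forall W, sm W -> (U <= W)%MS -> (W <= V)%MS -> (W <= U)%MS \/ (V <= W)%MS) ->
  simple_sq As U V.
Proof.
move=> su sv uv nvu h; split => //; first by rewrite rank_lt_sub.
move=> W sW /andP[uw wv]; case: (h W sW uw wv) => H.
  by left; rewrite H.
by right; rewrite wv.
Qed.

Lemma simple_eq U V U' V' : (U == U')%MS -> (V == V')%MS ->
  simple_sq As U V -> simple_sq As U' V'.
Proof.
move=> /andP[a1 a2] /andP[b1 b2] /simpleP[su sv uv nvu h].
apply: simpleI.
- by apply: sm_eq su; rewrite a1 a2.
- by apply: sm_eq sv; rewrite b1 b2.
- exact: submx_trans a2 (submx_trans uv b1).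
- by apply: contra nvu => H; exact: submx_trans b1 (submx_trans H a2).
move=> W sW uw wv.
case: (h W sW (submx_trans a1 uw) (submx_trans wv b2)) => H.
  by left; exact: submx_trans H a1.
by right; exact: submx_trans b2 H.
Qed.

Lemma sub_simple U V X : simple_sq As U V -> sm X -> (X <= V)%MS ->
  (X <= U)%MS \/ simple_sq As (X :&: U)%MS X.
Proof.
move=> /simpleP[su sv uv nvu h] sX xv.
case: (h (X + U)%MS (smD sX su) (addsmxSr _ _) _); first by rewrite addsmx_sub xv uv.
  by rewrite addsmx_sub => /andP[H _]; left.
move=> vxu; right; apply: simpleI.
- exact: smI.
- exact: sX.
- exact: capmxSl.
- rewrite sub_capmx submx_refl /=; apply: contra nvu => xu.
  by rewrite (submx_trans vxu) // addsmx_sub xu submx_refl.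
move=> W sW wl wx.
case: (h (W + U)%MS (smD sW su) (addsmxSr _ _) _); first by rewrite addsmx_sub uv (submx_trans wx xv).
  by rewrite addsmx_sub => /andP[wu _]; left; rewrite sub_capmx wx wu.
move=> vwu; right.
have: (X <= (W + U) :&: X)%MS by rewrite sub_capmx submx_refl (submx_trans xv vwu).
rewrite -(matrix_modl _ wx); move/submx_trans; apply.
by rewrite addsmx_sub submx_refl capmxC wl.
Qed.

Lemma simple_shift U X : simple_sq As (X :&: U)%MS X -> sm U ->
  simple_sq As U (X + U)%MS.
Proof.
move=> /simpleP[sxu sx _ nxu h] su.
apply: simpleI; rewrite ?smD ?addsmxSr //.
  apply: contra nxu; rewrite addsmx_sub => /andP[xu _]; by rewrite sub_capmx submx_refl.
move=> W sW uw wxu.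
case: (h (W :&: X)%MS (smI sW sx) _ (capmxSr _ _)).
- by rewrite sub_capmx capmxSl andbT (submx_trans (capmxSr _ _)) .
- move=> H; left.
  have: (W <= (U + X) :&: W)%MS by rewrite sub_capmx addsmxC wxu submx_refl.
  rewrite -(matrix_modl _ uw); move/submx_trans; apply.
  rewrite addsmx_sub submx_refl /= capmxC.
  exact: submx_trans H (capmxSr _ _).
- by rewrite sub_capmx => /andP[xw _]; right; rewrite addsmx_sub xw uw.
Qed.


Lemma zmod_id4 (M : zmodType) (a b c d : M) : a - b = (c - d) - (c - a) - (b - d).
Proof. by rewrite !opprB [c - d + _]addrC (addrA (a - c)) subrK addrA subrK. Qed.

Lemma subB_sub (X Y Z : 'M[F]_n) : (X <= Z)%MS -> (Y <= Z)%MS -> (X - Y <= Z)%MS.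
Proof. by move=> xz yz; apply: addmx_sub => //; rewrite eqmx_opp. Qed.

Lemma inj_of f U1 V1 U2 X : (V1 :&: kermx (f *m cokermx U2) <= U1)%MS ->
  (X <= V1)%MS -> (X *m f <= U2)%MS -> (X <= U1)%MS.
Proof.
move=> h xv xf; apply: submx_trans h; rewrite sub_capmx xv sub_kermx mulmxA.
by rewrite -submxE.
Qed.

Lemma inj_to f U1 V1 U2 :
  (forall X, (X <= V1)%MS -> (X *m f <= U2)%MS -> (X <= U1)%MS) ->
  (V1 :&: kermx (f *m cokermx U2) <= U1)%MS.
Proof.
move=> h; apply: h; first exact: capmxSl.
rewrite submxE -mulmxA -sub_kermx; exact: capmxSr.
Qed.

Lemma iso_id U1 V1 U2 V2 : (V1 <= V2)%MS -> (U1 <= U2)%MS ->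
  (V2 <= V1 + U2)%MS -> (V1 :&: U2 <= U1)%MS -> iso_sq As U1 V1 U2 V2.
Proof.
move=> h1 h2 h3 h4; exists 1%:M; split; rewrite ?mulmx1 //.
- apply: inj_to => X xv; rewrite mulmx1 => xu.
  by apply: submx_trans h4; rewrite sub_capmx xv xu.
- by move=> A _; rewrite mulmx1 mul1mx subrr mulmx0 sub0mx.
Qed.

Lemma iso_refl U V : iso_sq As U V U V.
Proof.
apply: iso_id; rewrite ?submx_refl ?addsmxSl ?capmxSr //.
Qed.

Lemma iso_trans U1 V1 U2 V2 U3 V3 :
  iso_sq As U1 V1 U2 V2 -> iso_sq As U2 V2 U3 V3 -> iso_sq As U1 V1 U3 V3.
Proof.
move=> [f1 [a1 b1 c1 d1 e1]] [f2 [a2 b2 c2 d2 e2]].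
exists (f1 *m f2); split.
- by rewrite mulmxA (submx_trans (submxMr _ a1)).
- by rewrite mulmxA (submx_trans (submxMr _ b1)).
- apply: submx_trans c2 _; rewrite addsmx_sub addsmxSr andbT.
  apply: submx_trans (submxMr f2 c1) _; rewrite addsmxMr addsmx_sub.
  by rewrite mulmxA addsmxSl /= (submx_trans b2) ?addsmxSr.
- apply: inj_to => X xv; rewrite mulmxA => xf.
  have h2 : (X *m f1 <= U2)%MS by apply: (inj_of d2 _ xf); exact: submx_trans (submxMr _ xv) a1.
  exact: (inj_of d1 xv h2).
- move=> A hA.
  have -> : A *m (f1 *m f2) - f1 *m f2 *m A =
            (A *m f1 - f1 *m A) *m f2 + f1 *m (A *m f2 - f2 *m A).
    by rewrite mulmxBl mulmxBr !mulmxA addrA subrK.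
  rewrite mulmxDr; apply: addmx_sub.
    by rewrite mulmxA (submx_trans (submxMr _ (e1 _ hA))).
  by rewrite mulmxA (submx_trans (submxMr _ a1)) ?e2.
Qed.

Section Sym.
Variables (f U1 V1 U2 : 'M[F]_n).
Let C := col_mx (V1 *m f) U2.
Let g := pinvmx C *m col_mx V1 0.

Lemma key_g X : (X <= V1 *m f + U2)%MS ->
  (X *m g <= V1)%MS /\ (X - X *m g *m f <= U2)%MS.
Proof.
rewrite addsmxE => xC.
have hX := mulmxKpV xC.
set D := X *m pinvmx _ in hX.
have Eg : X *m g = lsubmx D *m V1.
  by rewrite /g mulmxA -/D -[D]hsubmxK mul_row_col mulmx0 addr0 row_mxKl.
rewrite Eg; split; first exact: submxMl.
rewrite -{1}hX -{1}[D]hsubmxK mul_row_col -mulmxA addrAC subrr add0r.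
exact: submxMl.
Qed.

Lemma g_def : g = pinvmx C *m col_mx V1 0. Proof. by []. Qed.
End Sym.

Lemma iso_sym U1 V1 U2 V2 : sm V1 -> sm U2 -> sm V2 ->
  iso_sq As U1 V1 U2 V2 -> iso_sq As U2 V2 U1 V1.
Proof.
move=> sV1 sU2 sV2 [f [a b c d e]].
set g := pinvmx (col_mx (V1 *m f) U2) *m col_mx V1 0.
have K X : (X <= V1 *m f + U2)%MS -> (X *m g <= V1)%MS /\ (X - X *m g *m f <= U2)%MS.
  exact: key_g.
have XU2 : (U2 <= V1 *m f + U2)%MS by exact: addsmxSr.
exists g; split.
- by case: (K _ c).
- case: (K _ XU2) => h1 h2; apply: inj_of d h1 _.
  have -> : U2 *m g *m f = U2 - (U2 - U2 *m g *m f) by rewrite opprB addrC subrK.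
  exact: subB_sub.
- have hc : (V1 *m f <= V1 *m f + U2)%MS by exact: addsmxSl.
  case: (K _ hc) => h1 h2.
  have hY : (V1 - V1 *m f *m g <= U1)%MS.
    apply: inj_of d _ _; first by apply: subB_sub => //; rewrite submx_refl.
    by rewrite mulmxBl.
  rewrite -[X in (X <= _)%MS](subrK (V1 *m f *m g)) addsmxC.
  apply: addmx_sub_adds => //.
  exact: submxMr _ a.
- apply: inj_to => X xv xg.
  have xc : (X <= V1 *m f + U2)%MS := submx_trans xv c.
  case: (K _ xc) => h1 h2.
  rewrite -[X](subrK (X *m g *m f)); apply: addmx_sub => //.
  exact: submx_trans (submxMr _ xg) b.
- move=> A hA.
  have xA : (V2 *m A <= V1 *m f + U2)%MS.
    exact: submx_trans (smA sV2 hA) c.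
  case: (K _ xA) => h1 h2; case: (K _ c) => h3 h4.
  apply: inj_of d _ _.
    rewrite mulmxBr mulmxA; apply: subB_sub => //.
    by rewrite mulmxA (submx_trans (submxMr _ h3)) ?(smA sV1 hA).
  have -> : V2 *m (A *m g - g *m A) *m f =
     (V2 - V2 *m g *m f) *m A - (V2 *m A - V2 *m A *m g *m f)
       - V2 *m g *m (A *m f - f *m A).
    rewrite !mulmxBl !mulmxBr !mulmxBl !mulmxA.
    set a1 := V2 *m A *m g *m f; set b1 := V2 *m g *m A *m f.
    set c1 := V2 *m A; set d1 := V2 *m g *m f *m A.
    exact: zmod_id4.
  apply: subB_sub; first apply: subB_sub => //.
    exact: submx_trans (submxMr _ h4) (smA sU2 hA).
  exact: submx_trans (submxMr _ h3) (e _ hA).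
Qed.


Lemma iso_simple U1 V1 U2 V2 : sm U2 -> sm V2 -> (U2 <= V2)%MS ->
  iso_sq As U1 V1 U2 V2 -> simple_sq As U1 V1 -> simple_sq As U2 V2.
Proof.
move=> sU2 sV2 uv2 [f [a b c d e]] /simpleP[sU1 sV1 uv1 nvu1 h].
apply: simpleI => //.
  apply: contra nvu1 => vu2; apply: inj_of d (submx_refl _) _.
  exact: submx_trans a vu2.
move=> Z sZ uz zv.
pose Z' := (V1 :&: kermx (f *m cokermx Z))%MS.
have Z'P X : (X <= Z')%MS = (X <= V1)%MS && (X *m f <= Z)%MS.
  by rewrite sub_capmx sub_kermx mulmxA -submxE.
have sZ' : sm Z'.
  apply/smP => A hA; rewrite Z'P.
  have z1 : (Z' <= V1)%MS by exact: capmxSl.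
  have z2 : (Z' *m f <= Z)%MS by move: (submx_refl Z'); rewrite Z'P => /andP[].
  rewrite (submx_trans (submxMr _ z1)) ?(smA sV1 hA) //=.
  have -> : Z' *m A *m f = Z' *m (A *m f - f *m A) + Z' *m f *m A.
    by rewrite mulmxBr !mulmxA subrK.
  apply: addmx_sub; last exact: submx_trans (submxMr _ z2) (smA sZ hA).
  apply: submx_trans uz; apply: submx_trans (submxMr _ z1) _.
  exact: e.
have uz' : (U1 <= Z')%MS by rewrite Z'P uv1 (submx_trans b uz).
case: (h Z' sZ' uz' (capmxSl _ _)) => H.
  left; move/sub_addsmxP: (submx_trans zv c) => [[D1 D2] /= EZ].
  have hD2 : (D2 *m U2 <= U2)%MS by exact: submxMl.
  have hD : (D1 *m V1 <= Z')%MS.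
    rewrite Z'P submxMl /=.
    have -> : D1 *m V1 *m f = Z - D2 *m U2 by rewrite EZ mulmxA addrK.
    by apply: subB_sub; rewrite ?submx_refl // (submx_trans hD2).
  have hU : (D1 *m V1 *m f <= U2)%MS.
    exact: submx_trans (submxMr _ (submx_trans hD H)) b.
  by rewrite EZ; apply: addmx_sub; rewrite // mulmxA.
right; apply: submx_trans c _; rewrite addsmx_sub uz.
by move: H; rewrite Z'P submx_refl /= => ->.
Qed.


Lemma cap_sub_eq A B : (A <= B)%MS -> (A :&: B == A)%MS.
Proof. by move=> ab; rewrite capmxSl sub_capmx submx_refl ab. Qed.

Lemma cap_sub_eqr A B : (A <= B)%MS -> (B :&: A == A)%MS.
Proof. by move=> ab; rewrite capmxSr sub_capmx submx_refl ab. Qed.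

Lemma add_sub_eq A B : (A <= B)%MS -> (A + B == B)%MS.
Proof. by move=> ab; rewrite addsmxSr addsmx_sub submx_refl ab. Qed.

Lemma add_sub_eqr A B : (A <= B)%MS -> (B + A == B)%MS.
Proof. by move=> ab; rewrite addsmxSl addsmx_sub submx_refl ab. Qed.

Lemma ex_max (P : 'M[F]_n -> Prop) W0 : P W0 ->
  exists W, P W /\ (forall S, P S -> (W <= S)%MS -> (S <= W)%MS).
Proof.
move: W0; suff H m : forall W0, (n - \rank W0 < m)%N -> P W0 ->
  exists W, P W /\ (forall S, P S -> (W <= S)%MS -> (S <= W)%MS).
  by move=> W0; apply: (H (n - \rank W0).+1).
elim: m => [//|m IH] W0 hm P0.
case: (Classical_Prop.classic (exists S, P S /\ (W0 <= S)%MS /\ ~~ (S <= W0)%MS)).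
  move=> [S [PS [ws nsw]]]; apply: (IH S) => //.
  have : (\rank W0 < \rank S)%N by rewrite rank_lt_sub.
  have := rank_leq_col S; move: hm; rewrite ltnS; lia.
move=> Hn; exists W0; split => // S PS ws; apply/negP => nsw; apply: Hn.
by exists S; rewrite ws; split => //; split => //; apply/negP.
Qed.

Lemma ex_min (P : 'M[F]_n -> Prop) W0 : P W0 ->
  exists W, P W /\ (forall S, P S -> (S <= W)%MS -> (W <= S)%MS).
Proof.
move: W0; suff H m : forall W0, (\rank W0 < m)%N -> P W0 ->
  exists W, P W /\ (forall S, P S -> (S <= W)%MS -> (W <= S)%MS).
  by move=> W0; apply: (H (\rank W0).+1).
elim: m => [//|m IH] W0 hm P0.
case: (Classical_Prop.classic (exists S, P S /\ (S <= W0)%MS /\ ~~ (W0 <= S)%MS)).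
  move=> [S [PS [ws nsw]]]; apply: (IH S) => //.
  have : (\rank S < \rank W0)%N by rewrite rank_lt_sub.
  move: hm; rewrite ltnS; lia.
move=> Hn; exists W0; split => // S PS ws; apply/negP => nsw; apply: Hn.
by exists S; rewrite ws; split => //; split => //; apply/negP.
Qed.

Lemma max_simple A B : sm A -> sm B -> (A <= B)%MS -> ~~ (B <= A)%MS ->
  exists W, [/\ sm W, (A <= W)%MS & simple_sq As W B].
Proof.
move=> sA sB ab nba.
have [W [[sW [aw [wb nbw]]] Hm]] := ex_max
  (P := fun S => sm S /\ (A <= S)%MS /\ (S <= B)%MS /\ ~~ (B <= S)%MS)
  (conj sA (conj (submx_refl A) (conj ab nba))).
exists W; split => //; apply: simpleI => // S sS ws sb.
case bs: (B <= S)%MS; first by right.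
left; apply: Hm => //; split => //; split; first exact: submx_trans ws.
by rewrite sb bs.
Qed.

Lemma min_simple A B : sm A -> sm B -> (A <= B)%MS -> ~~ (B <= A)%MS ->
  exists Y, [/\ sm Y, (Y <= B)%MS & simple_sq As A Y].
Proof.
move=> sA sB ab nba.
have [Y [[sY [ay [yb nya]]] Hm]] := ex_min
  (P := fun S => sm S /\ (A <= S)%MS /\ (S <= B)%MS /\ ~~ (S <= A)%MS)
  (conj sB (conj ab (conj (submx_refl B) nba))).
exists Y; split => //; apply: simpleI => // S sS ws sb.
case bs: (S <= A)%MS; first by left.
right; apply: Hm => //; split => //; split => //; split; first exact: submx_trans yb.
by rewrite bs.
Qed.

End Lat.
Section Comp.
Variables (F : fieldType) (n : nat) (As : seq 'M[F]_n).
Local Notation sm := (submod As).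
Implicit Types U V W X Y Z A B C K : 'M[F]_n.
Variables (len : nat) (c : nat -> 'M[F]_n).
Hypothesis c0 : (c 0%N == (0 : 'M[F]_n))%MS.
Hypothesis clen : (c len == 1%:M)%MS.
Hypothesis cs : forall i, (i < len)%N -> simple_sq As (c i) (c i.+1).
Hypothesis cmf : forall i j, (i < len)%N -> (j < len)%N ->
  iso_sq As (c i) (c i.+1) (c j) (c j.+1) -> i = j.

Definition eps i X := (c i.+1 <= X + c i)%MS.
Definition inS A B i := [&& (i < len)%N, eps i B & ~~ eps i A].

Lemma eqmx_refl A : (A == A)%MS.
Proof. by rewrite submx_refl. Qed.

Lemma eqmsC A B : (A == B)%MS -> (B == A)%MS.
Proof. by case/andP => h1 h2; rewrite h1 h2. Qed.

Lemma eps_mono i A B : (A <= B)%MS -> eps i A -> eps i B.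
Proof. by rewrite /eps => ab h; apply: submx_trans h _; apply: addsmxS. Qed.

Lemma inS_eq A B A' B' i : (A == A')%MS -> (B == B')%MS -> inS A B i = inS A' B' i.
Proof.
move=> /andP[a1 a2] /andP[b1 b2]; rewrite /inS.
have -> : eps i B = eps i B' by apply/idP/idP; apply: eps_mono.
by have -> : eps i A = eps i A' by apply/idP/idP; apply: eps_mono.
Qed.

Lemma inS_eqP A B A' B' i : (A == A')%MS -> (B == B')%MS -> inS A B i -> inS A' B' i.
Proof. by move=> h1 h2; rewrite (inS_eq i h1 h2). Qed.

Lemma inS_lo A A' B i : (A <= A')%MS -> inS A' B i -> inS A B i.
Proof.
move=> aa /and3P[h1 h2 h3]; rewrite /inS h1 h2 /=.
by apply: contra h3; apply: eps_mono.
Qed.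

Lemma inS_hi A B B' i : (B <= B')%MS -> inS A B i -> inS A B' i.
Proof.
by move=> bb /and3P[h1 h2 h3]; rewrite /inS h1 h3 (eps_mono bb h2).
Qed.

Lemma inS_split A B C i : (A <= B)%MS -> (B <= C)%MS ->
  inS A C i -> inS A B i \/ inS B C i.
Proof.
move=> ab bc /and3P[h1 h2 h3]; rewrite /inS h1 h2 h3 /=.
by case e: (eps i B); [left|right].
Qed.

Lemma inS_disj A B C i : inS A B i -> inS B C i -> False.
Proof. by move=> /and3P[_ h _] /and3P[_ _ h2]; rewrite h in h2. Qed.

Lemma eps_c i : (i < len)%N -> ~~ eps i (c i).
Proof.
move=> il; have /simpleP[_ _ _ H _] := cs il.
by apply: contra H; rewrite /eps; move/submx_trans; apply; rewrite addsmx_sub submx_refl.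
Qed.

Lemma eps_0 i : (i < len)%N -> ~~ eps i 0.
Proof.
move=> il; apply: contra (eps_c il); apply: eps_mono; exact: sub0mx.
Qed.

Lemma eps_1 i X : (1%:M <= X)%MS -> eps i X.
Proof. by move=> h; rewrite /eps (submx_trans (submx1 _)) // (submx_trans h) ?addsmxSl. Qed.

(* c_{i+1} :&: X + c_i is c_i or c_{i+1} *)
Lemma cpiece i X : (i < len)%N -> sm X ->
  (c i.+1 :&: X <= c i)%MS \/ eps i X.
Proof.
move=> il sX; have /simpleP[sci sci1 cc _ H] := cs il.
case: (H (c i.+1 :&: X + c i)%MS); rewrite ?smD ?smI ?addsmxSr //.
- by rewrite addsmx_sub capmxSl cc.
- by rewrite addsmx_sub => /andP[h _]; left.
- move=> h; right; apply: submx_trans h _; apply: addsmxS => //; exact: capmxSr.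
Qed.

Lemma inS_empty A B : sm B -> (A <= B)%MS -> (forall i, ~~ inS A B i) -> (B <= A)%MS.
Proof.
move=> sB ab H.
suff Ht t : (t <= len)%N -> (c t :&: B <= A)%MS.
  apply: submx_trans (Ht _ (leqnn _)).
  by rewrite sub_capmx submx_refl andbT (submx_trans (submx1 _)) //; case/andP: clen.
elim: t => [_|t IH tl].
  by apply: submx_trans (capmxSl _ _) _; case/andP: c0 => h _; rewrite (submx_trans h) ?sub0mx.
have il : (t < len)%N by [].
case: (cpiece il sB) => h.
  apply: submx_trans (IH (ltnW tl)); by rewrite sub_capmx h capmxSr.
have eA : eps t A by move: (H t); rewrite /inS il h /= negbK.
have : (c t.+1 :&: B <= (A + c t) :&: B)%MS by apply: capmxS.
rewrite -(matrix_modl _ ab); move/submx_trans; apply.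
by rewrite addsmx_sub submx_refl IH // ltnW.
Qed.

Lemma inS_exists A B : sm B -> (A <= B)%MS -> ~~ (B <= A)%MS -> exists i, inS A B i.
Proof.
move=> sB ab nba; apply: Classical_Prop.NNPP => Hn; case/negP: nba.
apply: inS_empty => // i; apply/negP => hi; apply: Hn; by exists i.
Qed.


Lemma sm_c i : (i <= len)%N -> sm (c i).
Proof.
case: (ltngtP i len) => // [il _|-> _]; first by case/simpleP: (cs il).
by apply: sm_eq (sm1 As); rewrite submx1 andbT; case/andP: clen.
Qed.

Lemma cls_of_inS U V i : simple_sq As U V -> inS U V i ->
  iso_sq As (c i) (c i.+1) U V.
Proof.
move=> sUV /and3P[il eV nU]; have /simpleP[sU sV uv nvu H] := sUV.
have /simpleP[sci sci1 cc _ _] := cs il.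
set P := (c i.+1 :&: V)%MS; set Q := (c i.+1 :&: U)%MS.
have sP : sm P by exact: smI.
have sQ : sm Q by exact: smI.
have f1 : (Q <= c i)%MS by case: (cpiece il sU) => // h; rewrite h in nU.
have f2 : (c i.+1 <= P + c i)%MS.
  have : (c i.+1 <= (c i + V) :&: c i.+1)%MS by rewrite sub_capmx submx_refl andbT addsmxC; exact: eV.
  rewrite -(matrix_modl _ cc) addsmxC; move/submx_trans; apply.
  by apply: addsmxS; rewrite // capmxC.
have f3 : (c i :&: V <= U)%MS.
  case: (H (U + c i :&: V)%MS); rewrite ?smD ?smI ?addsmxSl //.
  - by rewrite addsmx_sub uv capmxSr.
  - by rewrite addsmx_sub => /andP[].
  move=> vw; case/negP: nU; apply: submx_trans f2 _; rewrite addsmx_sub addsmxSr andbT.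
  apply: submx_trans (capmxSr _ _) _; apply: submx_trans vw _.
  by rewrite addsmx_sub addsmxSl /= (submx_trans (capmxSl _ _)) ?addsmxSr.
have f4 : (V <= P + U)%MS.
  case: (H (P + U)%MS); rewrite ?smD ?addsmxSr //.
  - by rewrite addsmx_sub uv capmxSr.
  - rewrite addsmx_sub => /andP[pu _]; case/negP: nU; apply: submx_trans f2 _.
    by apply: addsmxS.
have i1 : iso_sq As Q P U V.
  apply: iso_id; rewrite ?capmxSr //; rewrite /P /Q.
  by apply: capmxS; rewrite ?capmxSl.
have i2 : iso_sq As Q P (c i) (c i.+1).
  apply: iso_id; rewrite ?capmxSl //; rewrite /P /Q sub_capmx.
  rewrite (submx_trans (capmxSl _ _)) ?capmxSl //=.
  apply: submx_trans f3; rewrite sub_capmx capmxSr /=.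
  exact: submx_trans (capmxSl _ _) (capmxSr _ _).
apply: iso_trans i1; exact: iso_sym i2.
Qed.

Lemma cls_uniq U V i j : sm U -> sm V -> (i < len)%N -> (j < len)%N ->
  iso_sq As (c i) (c i.+1) U V -> iso_sq As (c j) (c j.+1) U V -> i = j.
Proof.
move=> sU sV il jl hi hj; apply: cmf => //; apply: iso_trans hi _.
by apply: iso_sym; rewrite // sm_c.
Qed.

Lemma inS_uniq U V i j : simple_sq As U V -> inS U V i -> inS U V j -> i = j.
Proof.
move=> sUV hi hj; have /simpleP[sU sV _ _ _] := sUV.
have il : (i < len)%N by case/and3P: hi.
have jl : (j < len)%N by case/and3P: hj.
exact: (cls_uniq sU sV il jl (cls_of_inS sUV hi) (cls_of_inS sUV hj)).
Qed.

Lemma inS_of_cls U V i : simple_sq As U V -> (i < len)%N ->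
  iso_sq As (c i) (c i.+1) U V -> inS U V i.
Proof.
move=> sUV il hi; have /simpleP[sU sV uv nvu _] := sUV.
have [j hj] := inS_exists sV uv nvu.
have jl : (j < len)%N by case/and3P: hj.
by rewrite (cls_uniq sU sV il jl hi (cls_of_inS sUV hj)).
Qed.

Lemma transfer U V Q P i : simple_sq As U V -> inS U V i -> sm Q -> sm P ->
  (Q <= P)%MS -> iso_sq As U V Q P -> simple_sq As Q P /\ inS Q P i.
Proof.
move=> sUV hi sQ sP qp hiso.
have sQP := iso_simple sQ sP qp hiso sUV.
split => //; apply: inS_of_cls => //; first by case/and3P: hi.
exact: iso_trans (cls_of_inS sUV hi) hiso.
Qed.

Lemma cls_iso U1 V1 U2 V2 i : simple_sq As U1 V1 -> simple_sq As U2 V2 ->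
  inS U1 V1 i -> inS U2 V2 i -> iso_sq As U1 V1 U2 V2.
Proof.
move=> s1 s2 h1 h2; have /simpleP[sU1 sV1 _ _ _] := s1.
have /simpleP[sU2 sV2 _ _ _] := s2.
apply: iso_trans (cls_of_inS s2 h2).
have il : (i < len)%N by case/and3P: h1.
exact: iso_sym (sm_c il) sU1 sV1 (cls_of_inS s1 h1).
Qed.


Lemma inS_nsub A B i : inS A B i -> ~~ (B <= A)%MS.
Proof.
move=> /and3P[_ eB nA]; apply/negP => ba; case/negP: nA; exact: eps_mono eB.
Qed.

Lemma inS_simple_sub A B i : sm A -> sm B -> (A <= B)%MS -> inS A B i ->
  exists U V, [/\ simple_sq As U V, (A <= U)%MS, (V <= B)%MS & inS U V i].
Proof.
move=> sA; move: B; suff H m : forall B, (\rank B < m)%N -> sm B -> (A <= B)%MS ->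
  inS A B i -> exists U V, [/\ simple_sq As U V, (A <= U)%MS, (V <= B)%MS & inS U V i].
  by move=> B; apply: (H (\rank B).+1).
elim: m => [//|m IH] B hm sB ab hi.
have [W [sW aw sWB]] := max_simple sA sB ab (inS_nsub hi).
have /simpleP[_ _ wb nbw _] := sWB.
case: (inS_split aw wb hi) => h.
  have hr : (\rank W < m)%N.
    by move: hm; rewrite ltnS; apply: leq_trans; rewrite rank_lt_sub.
  have [U [V [s1 s2 s3 s4]]] := IH W hr sW aw h.
  by exists U, V; split => //; exact: submx_trans s3 wb.
by exists W, B; split.
Qed.

Lemma inS_of_const A B U V i : simple_sq As U V -> inS U V i ->
  constituent As A B U V -> inS A B i.
Proof.
move=> sUV hi [U' [V' [s' [au [vb hiso]]]]].
have /simpleP[sU sV _ _ _] := sUV.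
have /simpleP[sU' sV' _ _ _] := s'.
have il : (i < len)%N by case/and3P: hi.
apply: (inS_lo au); apply: (inS_hi vb); apply: inS_of_cls => //.
exact: iso_trans (cls_of_inS sUV hi) (iso_sym sV' sU sV hiso).
Qed.

Lemma const_of_inS A B U V i : sm A -> sm B -> (A <= B)%MS -> inS A B i ->
  simple_sq As U V -> inS U V i -> constituent As A B U V.
Proof.
move=> sA sB ab hAB sUV hUV.
have [U' [V' [s1 s2 s3 s4]]] := inS_simple_sub sA sB ab hAB.
exists U', V'; split => //; split => //; split => //.
exact: cls_iso s4 hUV.
Qed.

Lemma inS_addX A B X i : sm A -> sm B -> sm X -> (A <= B)%MS ->
  inS (A + X)%MS (B + X)%MS i -> inS A B i.
Proof.
move=> sA sB sX ab hi.
have [U' [V' [s1 s2 s3 s4]]] := inS_simple_sub (smD sA sX) (smD sB sX) (addsmxS ab (submx_refl X)) hi.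
have /simpleP[sU' sV' uv _ _] := s1.
set P := (V' :&: B)%MS; set Q := (P :&: U')%MS.
have sP : sm P by exact: smI.
have sQ : sm Q by exact: smI.
have xu : (X <= U')%MS by exact: submx_trans (addsmxSr _ _) s2.
have au : (A <= U')%MS by exact: submx_trans (addsmxSl _ _) s2.
have vpu : (V' <= P + U')%MS.
  rewrite /P (matrix_modr B uv) sub_capmx submx_refl /=.
  apply: submx_trans s3 _; exact: addsmxS (submx_refl B) xu.
have hid : iso_sq As Q P U' V'.
  by apply: iso_id; rewrite ?capmxSl ?capmxSr ?submx_refl.
have [_ hQP] := transfer s1 s4 sQ sP (capmxSl _ _) (iso_sym sP sU' sV' hid).
apply: (inS_lo _ (inS_hi _ hQP)); last exact: capmxSr.
rewrite /Q /P !sub_capmx au ab (submx_trans au uv) //.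
Qed.

Lemma inS_capY A B Y i : sm A -> sm B -> sm Y -> (A <= B)%MS ->
  inS (A :&: Y)%MS (B :&: Y)%MS i -> inS A B i.
Proof.
move=> sA sB sY ab hi.
have [U' [V' [s1 s2 s3 s4]]] := inS_simple_sub (smI sA sY) (smI sB sY) (capmxS ab (submx_refl Y)) hi.
have /simpleP[sU' sV' uv _ _] := s1.
have hid : iso_sq As U' V' (U' + A)%MS (V' + A)%MS.
  apply: iso_id.
  - exact: addsmxSl.
  - exact: addsmxSl.
  - by rewrite addsmx_sub addsmxSl /= (submx_trans (addsmxSr U' A)) // addsmxSr.
  rewrite capmxC -(matrix_modl _ uv) addsmx_sub submx_refl /=.
  apply: submx_trans s2; rewrite sub_capmx capmxSl /=.
  exact: submx_trans (capmxSr _ _) (submx_trans s3 (capmxSr _ _)).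
have [_ h2] := transfer s1 s4 (smD sU' sA) (smD sV' sA) (addsmxS uv (submx_refl A)) hid.
apply: (inS_lo (addsmxSr _ _) (inS_hi _ h2)).
by rewrite addsmx_sub ab (submx_trans s3 (capmxSl _ _)).
Qed.


Definition nonsplit X W Y := ~ (exists W', [/\ sm W', (X <= W' <= Y)%MS,
   (W' :&: W <= X)%MS & (Y <= W' + W)%MS]).

Lemma pointing_eps X W Y i1 i2 K : sm X -> sm W -> sm Y -> (W <= Y)%MS ->
  simple_sq As X W -> inS X W i2 -> simple_sq As W Y -> inS W Y i1 ->
  nonsplit X W Y -> sm K -> eps i1 K -> eps i2 K.
Proof.
move=> sX sW sY wy sXW h2 sWY h1 NS sK e1; apply/idPn => ne2.
have /simpleP[_ _ xw _ _] := sXW.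
set W' := (K :&: Y + X)%MS.
have sW' : sm W' by rewrite smD ?smI.
apply: NS; exists W'; split => //.
- by rewrite addsmxSr addsmx_sub capmxSr (submx_trans xw wy).
- apply: inS_empty; rewrite ?smI //; first by rewrite sub_capmx addsmxSr xw.
  move=> j; apply/negP => hj.
  have := inS_uniq sXW (inS_hi (capmxSr _ _) hj) h2 => ej; subst j.
  have := inS_hi (capmxSl _ _) hj.
  have eX : (X == (0 : 'M[F]_n) + X)%MS by rewrite addsmxSr addsmx_sub sub0mx submx_refl.
  move/(inS_eqP eX (eqmx_refl W')).
  move/(inS_addX (sm0 As) (smI sK sY) sX (sub0mx _ _)) => /and3P[_ e _].
  by case/negP: ne2; apply: eps_mono e; exact: capmxSl.
- apply: inS_empty => //; first by rewrite addsmx_sub wy addsmx_sub capmxSr (submx_trans xw wy).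
  move=> j; apply/negP => hj.
  have := inS_uniq sWY (inS_lo (addsmxSr _ _) hj) h1 => ej; subst j.
  have := inS_lo (addsmxSl _ _) hj.
  have eY : (Y == Y + X)%MS by rewrite addsmxSl addsmx_sub submx_refl (submx_trans xw wy).
  move/(inS_eqP (eqmx_refl W') eY).
  move/(inS_addX (smI sK sY) sY sX (capmxSr _ _)).
  have eY1 : (Y == 1%:M :&: Y)%MS by rewrite sub_capmx submx1 submx_refl capmxSr.
  move/(inS_eqP (eqmx_refl _) eY1).
  move/(inS_capY sK (sm1 As) sY (submx1 _)) => /and3P[_ _ ne].
  by rewrite e1 in ne.
Qed.


Lemma switch (b : nat -> bool) m : b 0%N -> ~~ b m -> exists2 t, (t < m)%N & b t && ~~ b t.+1.
Proof.
elim: m => [-> //|m IH] b0 bm.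
case bmm: (b m); first by exists m => //; rewrite bmm.
have [t tm ht] := IH b0 (negbT bmm); exists t => //; exact: ltnW.
Qed.

Variables (R T : nat -> 'M[F]_n) (L : nat).
Hypothesis Rf : rad_filt As R.
Hypothesis Tf : soc_filt As T.
Hypothesis LL : loewy_length R L.

Lemma R0 : (R 0%N == 1%:M)%MS. Proof. by case: Rf. Qed.
Lemma T0 : (T 0%N == (0 : 'M[F]_n))%MS. Proof. by case: Tf. Qed.
Lemma RL : (R L == (0 : 'M[F]_n))%MS. Proof. by case: LL. Qed.

Lemma Rrad t : is_rad As (R t) (R t.+1). Proof. by case: Rf. Qed.
Lemma Tsoc t : is_soc_over As (T t) 1%:M (T t.+1). Proof. by case: Tf. Qed.

Lemma smR t : sm (R t).
Proof.
case: t => [|t]; last by case: (Rrad t).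
by apply: sm_eq (sm1 As); rewrite submx1 andbT; case/andP: R0.
Qed.

Lemma smT t : sm (T t).
Proof.
case: t => [|t]; last by case: (Tsoc t).
by apply: sm_eq (sm0 As); rewrite sub0mx /=; case/andP: T0.
Qed.

Lemma RS t : (R t.+1 <= R t)%MS. Proof. by case: (Rrad t). Qed.
Lemma TS t : (T t <= T t.+1)%MS. Proof. by case: (Tsoc t) => _ /andP[]. Qed.

Lemma Ranti a b : (a <= b)%N -> (R b <= R a)%MS.
Proof.
move=> ab; rewrite -(subnKC ab); elim: (b - a)%N => [|m IH]; first by rewrite addn0.
by rewrite addnS; exact: submx_trans (RS _) IH.
Qed.

Lemma Tmono a b : (a <= b)%N -> (T a <= T b)%MS.
Proof.
move=> ab; rewrite -(subnKC ab); elim: (b - a)%N => [|m IH]; first by rewrite addn0.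
by rewrite addnS; exact: submx_trans IH (TS _).
Qed.

Lemma socP t W : simple_sq As (T t) W -> (W <= T t.+1)%MS.
Proof. by case: (Tsoc t) => _ _ H _ sW; apply: H => //; exact: submx1. Qed.

Lemma radP t W : simple_sq As W (R t) -> (R t.+1 <= W)%MS.
Proof. by case: (Rrad t) => _ _ H _; apply: H. Qed.

Lemma sm_bigcap (Ws : seq 'M[F]_n) : (forall W, W \in Ws -> sm W) ->
  sm (\bigcap_(W <- Ws) W)%MS.
Proof.
elim: Ws => [|W Ws IH] H; rewrite ?big_nil ?big_cons; first exact: sm1.
apply: smI; first by apply: H; exact: mem_head.
by apply: IH => W0 h; apply: H; rewrite in_cons h orbT.
Qed.

Lemma sm_bigsum (Ws : seq 'M[F]_n) : (forall W, W \in Ws -> sm W) ->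
  sm (\sum_(W <- Ws) W)%MS.
Proof.
elim: Ws => [|W Ws IH] H; rewrite ?big_nil ?big_cons; first exact: sm0.
apply: smD; first by apply: H; exact: mem_head.
by apply: IH => W0 h; apply: H; rewrite in_cons h orbT.
Qed.

Lemma soc_claim m (Ws : seq 'M[F]_n) P : sm P ->
  (forall W, W \in Ws -> sm W /\ ((P <= W)%MS \/ simple_sq As (P :&: W)%MS P)) ->
  (((\bigcap_(W <- Ws) W) :&: P)%MS <= T m)%MS -> (P <= T m.+1)%MS.
Proof.
elim: Ws P => [|W Ws IH] P sP HW.
  rewrite big_nil => h; apply: submx_trans (TS m); apply: submx_trans h.
  by rewrite sub_capmx submx1 submx_refl.
rewrite big_cons => hI.
set I := (\bigcap_(W0 <- Ws) W0)%MS in hI *.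
have [sW hWP] := HW W (mem_head _ _).
have HWs : forall W0, W0 \in Ws -> sm W0 /\ ((P <= W0)%MS \/ simple_sq As (P :&: W0)%MS P).
  by move=> W0 h; apply: HW; rewrite in_cons h orbT.
have hP' : (P :&: W <= T m.+1)%MS.
  apply: IH; first exact: smI.
    move=> W0 h; have [sW0 [h0|h0]] := HWs W0 h; split => //.
      by left; exact: submx_trans (capmxSl _ _) h0.
    have := sub_simple h0 (smI sP sW) (capmxSl _ _).
    case=> [h1|h1]; first by left; exact: submx_trans h1 (capmxSr _ _).
    right; apply: simple_eq h1 => //; last by rewrite submx_refl.
    by ms.
  by apply: submx_trans hI; ms.
case: hWP => [pw|sPW]; first by apply: submx_trans hP'; rewrite sub_capmx submx_refl pw.
have sI : sm (I :&: P)%MS.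
  apply: smI sP; apply: sm_bigcap => W0 h; by case: (HWs W0 h).
set P'' := (I :&: P)%MS.
have IHP : (P'' <= T m)%MS -> (P <= T m.+1)%MS by move=> h; apply: IH.
case: (boolP (P'' <= P :&: W)%MS) => [hpw|hpw].
  by apply: IHP; apply: submx_trans hI; move: hpw; rewrite /P'' => hpw; ms.
case: (sub_simple sPW sI (capmxSr _ _)) => [h|sQ]; first by rewrite h in hpw.
case: (boolP (P'' <= T m)%MS) => [h|hT]; first exact: IHP.
have /simpleP[sQ' _ qp _ HQ] := sQ.
have hQT : (P'' :&: (P :&: W) <= T m)%MS by apply: submx_trans hI; rewrite /P''; ms.
case: (HQ (T m :&: P'')%MS (smI (smT m) sI)) => [||h|h].
- by ms.
- exact: capmxSr.
- have sQ2 : simple_sq As (P'' :&: T m)%MS P''.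
    apply: simple_eq sQ; last exact: eqmx_refl.
    apply/andP; split; first by ms.
    by apply: submx_trans h; ms.
  have := socP (simple_shift sQ2 (smT m)).
  rewrite addsmx_sub => /andP[h1 _].
  have /simpleP[_ _ _ _ HP] := sPW.
  case: (HP (P'' + P :&: W)%MS (smD sI (smI sP sW))) => [||h2|h2].
  + exact: addsmxSr.
  + by rewrite addsmx_sub capmxSr capmxSl.
  + by case/negP: hpw; apply: submx_trans h2; exact: addsmxSl.
  + by rewrite (submx_trans h2) // addsmx_sub h1 hP'.
- by case/negP: hT; apply: submx_trans h (capmxSl _ _).
Qed.


Lemma RT_sub t : (t <= L)%N -> (R (L - t) <= T t)%MS.
Proof.
elim: t => [_|t IH tL].
  rewrite subn0; case/andP: RL => h _; exact: submx_trans h (sub0mx _ _).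
have e : (L - t = (L - t.+1).+1)%N by lia.
have := IH (ltnW tL); rewrite e; set N := R (L - t.+1) => hN.
case: (Rrad (L - t.+1)) => _ _ _ [Ws [HWs hI]].
apply: (soc_claim (Ws := Ws)); first exact: smR.
  move=> W hW; have sW := HWs W hW; have /simpleP[sW' _ wn _ _] := sW.
  split => //; right; apply: simple_eq sW; last exact: eqmx_refl.
  by apply/andP; split; ms.
exact: submx_trans hI hN.
Qed.

Lemma RT k : (k <= L)%N -> (R k <= T (L - k))%MS.
Proof. by move=> kL; have := RT_sub (leq_subr k L); rewrite subKn. Qed.

Lemma TL : (T L == 1%:M)%MS.
Proof.
apply/andP; split; first exact: submx1.
have := RT (leq0n L); rewrite subn0; apply: submx_trans.
by case/andP: R0.
Qed.

Definition rl i d := inS (R d.+1) (R d) i.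
Definition sl i d := inS (T d) (T d.+1) i.

Lemma rl_ex i : (i < len)%N -> exists2 d, (d < L)%N & rl i d.
Proof.
move=> il.
have b0 : eps i (R 0%N) by apply: eps_1; case/andP: R0.
have bL : ~~ eps i (R L) by apply: contra (eps_0 il); apply: eps_mono; case/andP: RL.
have [d dL /andP[h1 h2]] := switch (b := fun t => eps i (R t)) b0 bL.
by exists d => //; rewrite /rl /inS il h1 h2.
Qed.

Lemma sl_ex i : (i < len)%N -> exists2 d, (d < L)%N & sl i d.
Proof.
move=> il.
have b0 : ~~ eps i (T 0%N) by apply: contra (eps_0 il); apply: eps_mono; case/andP: T0.
have bL : ~~ ~~ eps i (T L) by rewrite negbK; apply: eps_1; case/andP: TL.
have [d dL /andP[h1 h2]] := switch (b := fun t => ~~ eps i (T t)) b0 bL.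
by exists d => //; rewrite /sl /inS il h1; rewrite negbK in h2; rewrite h2.
Qed.

Lemma rl_uniq i a b : rl i a -> rl i b -> a = b.
Proof.
wlog ab : a b / (a <= b)%N.
  by move=> H ha hb; case: (leqP a b) => h; [apply: H | symmetry; apply: H => //; apply: ltnW].
move=> /and3P[_ ea na] /and3P[_ eb nb]; apply/eqP; rewrite eqn_leq ab /=.
rewrite leqNgt; apply/negP => ba; case/negP: na; apply: eps_mono eb; exact: Ranti.
Qed.

Lemma sl_uniq i a b : sl i a -> sl i b -> a = b.
Proof.
wlog ab : a b / (a <= b)%N.
  by move=> H ha hb; case: (leqP a b) => h; [apply: H | symmetry; apply: H => //; apply: ltnW].
move=> /and3P[_ ea na] /and3P[_ eb nb]; apply/eqP; rewrite eqn_leq ab /=.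
rewrite leqNgt; apply/negP => ba; case/negP: nb; exact: eps_mono (Tmono ba) ea.
Qed.

Lemma rl_lt i d : rl i d -> (d < L)%N.
Proof.
move=> /and3P[il e _]; rewrite ltnNge; apply/negP => Ld; case/negP: (eps_0 il).
apply: eps_mono e; apply: submx_trans (Ranti Ld) _; by case/andP: RL.
Qed.

Lemma sl_lt i d : sl i d -> (d < L)%N.
Proof.
move=> /and3P[il _ ne]; rewrite ltnNge; apply/negP => Ld; case/negP: ne.
apply: eps_mono (Tmono Ld) _; apply: eps_1; by case/andP: TL.
Qed.

Lemma bigcap_split N (Ws : seq 'M[F]_n) i : sm N ->
  (forall W, W \in Ws -> sm W /\ (W <= N)%MS) ->
  inS ((\bigcap_(W <- Ws) W) :&: N)%MS N i -> exists2 W, W \in Ws & inS W N i.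
Proof.
move=> sN; elim: Ws => [|W Ws IH] HW; rewrite ?big_nil ?big_cons.
  move=> /and3P[_ e ne]; case/negP: ne; apply: eps_mono e; by ms.
set I := (\bigcap_(W0 <- Ws) W0)%MS => h.
have [sW wn] := HW W (mem_head _ _).
have HWs : forall W0, W0 \in Ws -> sm W0 /\ (W0 <= N)%MS.
  by move=> W0 h0; apply: HW; rewrite in_cons h0 orbT.
have sI : sm I by apply: sm_bigcap => W0 h0; case: (HWs W0 h0).
have e1 : (W :&: I :&: N == W :&: (I :&: N))%MS by ms.
have := inS_eqP e1 (eqmx_refl N) h => {}h.
case: (inS_split (capmxSl _ _) wn h) => h2; last by exists W; rewrite ?mem_head.
have e2 : (W :&: (I :&: N) == (I :&: N) :&: W)%MS by ms.
have e3 : (W == N :&: W)%MS by apply/andP; split; ms.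
have := inS_capY (smI sI sN) sN sW (capmxSr _ _) (inS_eqP e2 e3 h2) => h3.
have [W0 h0 h4] := IH HWs h3; exists W0 => //; by rewrite in_cons h0 orbT.
Qed.

Lemma bigsum_split B (Ws : seq 'M[F]_n) i : sm B ->
  (forall W, W \in Ws -> sm W /\ (B <= W)%MS) ->
  inS B (B + \sum_(W <- Ws) W)%MS i -> exists2 W, W \in Ws & inS B W i.
Proof.
move=> sB; elim: Ws => [|W Ws IH] HW; rewrite ?big_nil ?big_cons.
  move=> /and3P[_ e ne]; case/negP: ne; apply: eps_mono e; by ms.
set S := (\sum_(W0 <- Ws) W0)%MS => h.
have [sW bw] := HW W (mem_head _ _).
have HWs : forall W0, W0 \in Ws -> sm W0 /\ (B <= W0)%MS.
  by move=> W0 h0; apply: HW; rewrite in_cons h0 orbT.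
have sS : sm S by apply: sm_bigsum => W0 h0; case: (HWs W0 h0).
have e1 : (B + (W + S) == (B + S) + W)%MS by ms.
have := inS_eqP (eqmx_refl B) e1 h => {}h.
case: (inS_split (addsmxSl B S) (addsmxSl _ W) h) => h2.
  have [W0 h0 h4] := IH HWs h2; exists W0 => //; by rewrite in_cons h0 orbT.
have e2 : (B + S == ((B + S) :&: W) + (B + S))%MS by apply/andP; split; ms.
have e3 : ((B + S) + W == W + (B + S))%MS by ms.
have := inS_addX (smI (smD sB sS) sW) sW (smD sB sS) (capmxSr _ _) (inS_eqP e2 e3 h2).
move/(inS_lo (A := B)) => h3; exists W; rewrite ?mem_head //; apply: h3; by ms.
Qed.

Lemma rad_cover d i : rl i d ->
  exists Q, [/\ simple_sq As Q (R d), (R d.+1 <= Q)%MS & inS Q (R d) i].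
Proof.
move=> h; case: (Rrad d) => _ _ _ [Ws [HWs hI]].
have HW : forall W, W \in Ws -> sm W /\ (W <= R d)%MS.
  by move=> W hW; have /simpleP[? _ ? _ _] := HWs W hW.
have [Q hQ hi] := bigcap_split (smR d) HW (inS_lo hI h).
by exists Q; split; [exact: HWs | apply: radP; exact: HWs | exact: hi].
Qed.

Lemma soc_cover j i : sl i j ->
  exists K, [/\ simple_sq As (T j) K, (K <= T j.+1)%MS & inS (T j) K i].
Proof.
move=> h; case: (Tsoc j) => _ _ _ [Ws [HWs hI]].
have HW : forall W, W \in Ws -> sm W /\ (T j <= W)%MS.
  by move=> W hW; have [/simpleP[_ ? ? _ _] _] := HWs W hW.
have [K hK hi] := bigsum_split (smT j) HW (inS_hi hI h).
by exists K; split; rewrite ?socP; case: (HWs K hK).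
Qed.


Lemma count_two (a b m : nat) : a != b -> (a < m)%N -> (b < m)%N ->
  count (fun t => (t == a) || (t == b)) (iota 0 m) = 2%N.
Proof.
move=> ab am bm.
have := count_predUI (pred1 a) (pred1 b) (iota 0 m).
rewrite !count_uniq_mem ?iota_uniq // !mem_iota /= am bm.
have -> : count (predI (pred1 a) (pred1 b)) (iota 0 m) = 0%N.
  rewrite (eq_count (a2 := pred0)) ?count_pred0 // => t /=.
  by case: (eqVneq t a) => [->|] //=; rewrite (negbTE ab).
by rewrite addn0.
Qed.

Lemma count2 (lo hi : nat -> 'M[F]_n) X W Y i1 i2 a b :
  (forall t, [/\ sm (lo t), sm (hi t) & (lo t <= hi t)%MS]) ->
  (forall t t' j, inS (lo t) (hi t) j -> inS (lo t') (hi t') j -> t = t') ->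
  (forall j, inS X Y j -> exists2 t, (t < L)%N & inS (lo t :&: Y + X)%MS (hi t :&: Y + X)%MS j) ->
  sm X -> sm W -> sm Y -> (X <= W)%MS -> (W <= Y)%MS ->
  simple_sq As X W -> simple_sq As W Y -> inS X W i2 -> inS W Y i1 ->
  (a < L)%N -> (b < L)%N -> a != b -> inS (lo a) (hi a) i1 -> inS (lo b) (hi b) i2 ->
  count (fun t => ~~ ((hi t :&: Y) + X <= (lo t :&: Y) + X)%MS) (iota 0 L) = 2%N.
Proof.
move=> Hlh Hu Hc sX sW sY xw wy sXW sWY h2 h1 aL bL ab ha hb.
have back t1 j : inS (lo t1 :&: Y + X)%MS (hi t1 :&: Y + X)%MS j -> inS (lo t1) (hi t1) j.
  have [slo shi lh] := Hlh t1.
  move/(inS_addX (smI slo sY) (smI shi sY) sX (capmxS lh (submx_refl _))).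
  exact: inS_capY.
rewrite -(count_two ab aL bL); apply: eq_in_count => t _ /=.
have [slo shi lh] := Hlh t.
have sGl : sm (lo t :&: Y + X)%MS by rewrite smD ?smI.
have sGh : sm (hi t :&: Y + X)%MS by rewrite smD ?smI.
have Gle : (lo t :&: Y + X <= hi t :&: Y + X)%MS.
  by apply: addsmxS => //; apply: capmxS.
apply/idP/idP.
  move=> hnz; have [j hj] := inS_exists sGh Gle hnz.
  have hXY : inS X Y j.
    apply: (inS_lo (addsmxSr _ _)); apply: (inS_hi _ hj).
    by rewrite addsmx_sub capmxSr (submx_trans xw wy).
  case: (inS_split xw wy hXY) => hj2.
    have ej := inS_uniq sXW h2 hj2; subst j.
    by rewrite (Hu _ _ _ (back _ _ hj) hb) eqxx orbT.
  have ej := inS_uniq sWY h1 hj2; subst j.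
  by rewrite (Hu _ _ _ (back _ _ hj) ha) eqxx.
have cov j t0 : inS X Y j -> inS (lo t0) (hi t0) j ->
    ~~ (hi t0 :&: Y + X <= lo t0 :&: Y + X)%MS.
  move=> hj ht0; have [t' _ ht'] := Hc j hj.
  have := Hu _ _ _ (back _ _ ht') ht0 => et; subst t0.
  exact: inS_nsub ht'.
have h2Y : inS X Y i2 by exact: inS_hi wy h2.
have h1Y : inS X Y i1 by exact: inS_lo xw h1.
case/orP => /eqP ->; [exact: cov h1Y ha | exact: cov h2Y hb].
Qed.


Lemma rad_cov X Y j : sm X -> sm Y -> (X <= Y)%MS -> inS X Y j ->
  exists2 t, (t < L)%N & inS (R t.+1 :&: Y + X)%MS (R t :&: Y + X)%MS j.
Proof.
move=> sX sY xy /and3P[jl eY nX].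
have b0 : eps j (R 0%N :&: Y + X)%MS.
  apply: eps_mono eY; case/andP: R0 => _ h.
  by apply: submx_trans (addsmxSl _ X); rewrite sub_capmx submx_refl (submx_trans (submx1 _) h).
have bL : ~~ eps j (R L :&: Y + X)%MS.
  apply: contra nX; apply: eps_mono; rewrite addsmx_sub submx_refl andbT.
  apply: submx_trans (capmxSl _ _) _; case/andP: RL => h _; exact: submx_trans h (sub0mx _ _).
have [t tL /andP[h1 h2]] := switch (b := fun t => eps j (R t :&: Y + X)%MS) b0 bL.
by exists t => //; rewrite /inS jl h1 h2.
Qed.

Lemma soc_cov X Y j : sm X -> sm Y -> (X <= Y)%MS -> inS X Y j ->
  exists2 t, (t < L)%N & inS (T t :&: Y + X)%MS (T t.+1 :&: Y + X)%MS j.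
Proof.
move=> sX sY xy /and3P[jl eY nX].
have b0 : ~~ eps j (T 0%N :&: Y + X)%MS.
  apply: contra nX; apply: eps_mono; rewrite addsmx_sub submx_refl andbT.
  apply: submx_trans (capmxSl _ _) _; case/andP: T0 => h _; exact: submx_trans h (sub0mx _ _).
have bL : ~~ ~~ eps j (T L :&: Y + X)%MS.
  rewrite negbK; apply: eps_mono eY; case/andP: TL => _ h.
  by apply: submx_trans (addsmxSl _ X); rewrite sub_capmx submx_refl (submx_trans (submx1 _) h).
have [t tL /andP[h1 h2]] := switch (b := fun t => ~~ eps j (T t :&: Y + X)%MS) b0 bL.
by exists t => //; rewrite negbK in h2; rewrite /inS jl h1 h2.
Qed.

Definition pdata X W Y i1 i2 :=
  [/\ [/\ sm X, sm W, sm Y, (X <= W)%MS & (W <= Y)%MS],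
      [/\ simple_sq As X W, inS X W i2, simple_sq As W Y & inS W Y i1] &
      nonsplit X W Y].

Lemma pdata_neq X W Y i1 i2 : pdata X W Y i1 i2 -> i1 != i2.
Proof.
case=> _ [_ h2 _ h1] _; apply/eqP => e; subst i2; exact: inS_disj h2 h1.
Qed.

Lemma pdata_eps X W Y i1 i2 K : pdata X W Y i1 i2 -> sm K -> eps i1 K -> eps i2 K.
Proof.
case=> [[sX sW sY xw wy] [s2 h2 s1 h1] NS] sK e1; exact: (pointing_eps sX sW sY wy s2 h2 s1 h1 NS sK e1).
Qed.

Lemma dir_rad X W Y i1 i2 a b : pdata X W Y i1 i2 -> rl i1 a -> rl i2 b -> (a < b)%N.
Proof.
move=> D ha hb.
have eb : eps i2 (R a).
  by apply: (pdata_eps D (smR a)); case/and3P: ha.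
have ab : (a <= b)%N.
  rewrite leqNgt; apply/negP => ba; case/and3P: hb => _ _; case/negP.
  exact: eps_mono (Ranti ba) eb.
rewrite ltn_neqAle ab andbT; apply/eqP => e; subst b.
have [Q [sQ rq hQ]] := rad_cover hb.
have /simpleP[sQ' _ qr _ _] := sQ.
case: (inS_split rq qr ha) => h.
  case/and3P: hQ => _ _; case/negP; apply: (pdata_eps D sQ').
  by case/and3P: h.
by case/negP: (pdata_neq D); rewrite (inS_uniq sQ h hQ).
Qed.

Lemma dir_soc X W Y i1 i2 a b : pdata X W Y i1 i2 -> sl i1 a -> sl i2 b -> (b < a)%N.
Proof.
move=> D ha hb.
have eb : eps i2 (T a.+1).
  by apply: (pdata_eps D (smT a.+1)); case/and3P: ha.
have ab : (b <= a)%N.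
  rewrite leqNgt; apply/negP => ba; case/and3P: hb => _ _; case/negP.
  exact: eps_mono (Tmono ba) eb.
rewrite ltn_neqAle ab andbT; apply/eqP => e; subst b.
have [K [sK kt hK]] := soc_cover ha.
have /simpleP[_ sK' tk _ _] := sK.
have e2 : eps i2 K by apply: (pdata_eps D sK'); case/and3P: hK.
have h2 : inS (T a) K i2 by case/and3P: hb => il _ ne; rewrite /inS il e2 ne.
by case/negP: (pdata_neq D); rewrite (inS_uniq sK hK h2).
Qed.

Lemma fp_data hi lo U1 V1 U2 V2 i1 i2 :
  simple_sq As U1 V1 -> simple_sq As U2 V2 -> inS U1 V1 i1 -> inS U2 V2 i2 ->
  fpoints As hi lo L U1 V1 U2 V2 ->
  exists X W Y, pdata X W Y i1 i2 /\
    count (fun k => ~~ ((hi k :&: Y) + X <= (lo k :&: Y) + X)%MS) (iota 0 L) = 2%N.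
Proof.
move=> s1 s2 h1 h2 [X [W [Y [/and4P[sX sW sY /andP[xw wy]] iXW iWY NS cnt]]]].
exists X, W, Y; split => //; split => //.
have /simpleP[sU1 sV1 _ _ _] := s1.
have /simpleP[sU2 sV2 _ _ _] := s2.
have [t2 t2'] := transfer s2 h2 sX sW xw (iso_sym sW sU2 sV2 iXW).
have [t1 t1'] := transfer s1 h1 sW sY wy (iso_sym sY sU1 sV1 iWY).
by split.
Qed.


Lemma class_ex U V : simple_sq As U V -> exists i, inS U V i.
Proof. by case/simpleP => _ sV uv nvu _; exact: inS_exists. Qed.

Lemma inS_len A B i : inS A B i -> (i < len)%N.
Proof. by case/and3P. Qed.

Lemma inS_iso U1 V1 U2 V2 i : simple_sq As U1 V1 -> simple_sq As U2 V2 ->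
  iso_sq As U1 V1 U2 V2 -> inS U2 V2 i -> inS U1 V1 i.
Proof.
move=> s1 s2 hiso h2; have /simpleP[sU1 sV1 uv1 _ _] := s1.
have /simpleP[sU2 sV2 _ _ _] := s2.
by case: (transfer s2 h2 sU1 sV1 uv1 (iso_sym sV1 sU2 sV2 hiso)).
Qed.

Lemma bad_class i k0 : (k0 <= L)%N -> inS (R k0) (T (L - k0)) i ->
  exists a b, [/\ (a < k0)%N, (b < L - k0)%N, rl i a & sl i b].
Proof.
move=> kL /and3P[il eT nR].
have b0 : eps i (R 0%N) by apply: eps_1; case/andP: R0.
have [a ak /andP[h1 h2]] := switch (b := fun t => eps i (R t)) b0 nR.
have c0' : ~~ eps i (T 0%N) by apply: contra (eps_0 il); apply: eps_mono; case/andP: T0.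
have cL : ~~ ~~ eps i (T (L - k0)) by rewrite negbK.
have [b bk /andP[g1 g2]] := switch (b := fun t => ~~ eps i (T t)) c0' cL.
exists a, b; split => //; first by rewrite /rl /inS il h1 h2.
by rewrite negbK in g2; rewrite /sl /inS il g1 g2.
Qed.

Lemma ar1 a b k0 L0 : (a < k0)%N -> (b < L0 - k0)%N -> (k0 <= L0)%N ->
  (L0 - 1 - a <= b)%N -> False.
Proof. lia. Qed.

Lemma ar2 a b k0 L0 : (a < k0)%N -> (b < L0 - k0)%N -> (k0 <= L0)%N ->
  (L0 - 1 - b <= a)%N -> False.
Proof. lia. Qed.

Lemma ar3 m t : (t.+1 <= m)%N ->
  [/\ (m - t.+1).+1 = (m - t)%N, ((m - t.+1).+1 <= m)%N, (m - t.+1 <= m)%N & (m - t.+1 < m)%N].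
Proof. move=> h; split; lia. Qed.

Lemma rev_rad :
  (forall U V, simple_sq As U V -> forall d, constituent As (R d.+1) (R d) U V ->
     exists p : nat -> 'M[F]_n * 'M[F]_n,
       ext_path As (rad_points As R L) (L - 1 - d) p /\
       iso_sq As (p 0%N).1 (p 0%N).2 U V) -> rigid R T L.
Proof.
move=> H k0 kL; apply/andP; split; first exact: RT.
apply: inS_empty (smT _) (RT kL) _ => i; apply/negP => hi.
have [a [b [ak bk ha hb]]] := bad_class kL hi.
have [U [V [sUV _ _ hUV]]] := inS_simple_sub (smR _) (smR _) (RS _) ha.
have cst : constituent As (R a.+1) (R a) U V.
  exact: const_of_inS (smR _) (smR _) (RS _) ha sUV hUV.
have [p [[Hs Hp] iso0]] := H U V sUV a cst.
set m := (L - 1 - a)%N in Hs Hp.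
suff Cl t : (t <= m)%N -> forall j b', inS (p (m - t)%N).1 (p (m - t)%N).2 j -> sl j b' -> (t <= b')%N.
  have h0 : inS (p 0%N).1 (p 0%N).2 i := inS_iso (Hs 0%N (leq0n _)) sUV iso0 hUV.
  have := Cl m (leqnn m) i b; rewrite subnn => /(_ h0 hb).
  exact: ar1 ak bk kL.
elim: t => [//|t IH] tm j b' hj hb'.
set s := (m - t.+1)%N in hj.
have [sm1 hs1 hs0 hs] := ar3 tm.
have [j' hj'] := class_ex (Hs s.+1 hs1).
have [b'' _ hb''] := sl_ex (inS_len hj').
have := IH (ltnW tm) j' b''; rewrite -sm1 => /(_ hj' hb'') tb.
have [X [W [Y [D _]]]] := fp_data (Hs s hs0) (Hs s.+1 hs1) hj hj' (Hp s hs).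
exact: leq_ltn_trans tb (dir_soc D hb' hb'').
Qed.

Lemma rev_soc :
  (forall U V, simple_sq As U V -> forall d, constituent As (T d) (T d.+1) U V ->
     exists p : nat -> 'M[F]_n * 'M[F]_n,
       ext_path As (soc_points As T L) (L - 1 - d) p /\
       iso_sq As (p (L - 1 - d)%N).1 (p (L - 1 - d)%N).2 U V) -> rigid R T L.
Proof.
move=> H k0 kL; apply/andP; split; first exact: RT.
apply: inS_empty (smT _) (RT kL) _ => i; apply/negP => hi.
have [a [b [ak bk ha hb]]] := bad_class kL hi.
have [U [V [sUV _ _ hUV]]] := inS_simple_sub (smT _) (smT _) (TS _) hb.
have cst : constituent As (T b) (T b.+1) U V.
  exact: const_of_inS (smT _) (smT _) (TS _) hb sUV hUV.
have [p [[Hs Hp] isom]] := H U V sUV b cst.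
set m := (L - 1 - b)%N in Hs Hp isom.
suff Cl t : (t <= m)%N -> forall j a', inS (p t).1 (p t).2 j -> rl j a' -> (t <= a')%N.
  have hm : inS (p m).1 (p m).2 i := inS_iso (Hs m (leqnn _)) sUV isom hUV.
  have := Cl m (leqnn m) i a hm ha.
  exact: ar2 ak bk kL.
elim: t => [//|t IH] tm j a' hj ha'.
have [j0 hj0] := class_ex (Hs t (ltnW tm)).
have [a0 _ ha0] := rl_ex (inS_len hj0).
have := IH (ltnW tm) j0 a0 hj0 ha0 => ta.
have [X [W [Y [D _]]]] := fp_data (Hs t (ltnW tm)) (Hs t.+1 tm) hj0 hj (Hp t tm).
exact: leq_ltn_trans ta (dir_rad D ha0 ha').
Qed.


Lemma ar4 d : (d.+1 < L)%N ->
  [/\ (L - d = (L - d.+2).+2)%N, (L - d.+1 = (L - d.+2).+1)%N,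
      (d <= L)%N, (d.+1 <= L)%N & (d.+2 <= L)%N].
Proof. move=> h; split; lia. Qed.

Lemma ar5 j : (j.+1 < L)%N ->
  [/\ (L - (L - j.+2) = j.+2)%N, (L - (L - j.+2).+1 = j.+1)%N,
      (L - (L - j.+2).+2 = j)%N, ((L - j.+2) <= L)%N &
      [/\ ((L - j.+2).+1 <= L)%N, ((L - j.+2).+2 <= L)%N & ((L - j.+2).+1 < L)%N]].
Proof. move=> h; split; try split; lia. Qed.

Lemma step_rad U V i d : rigid R T L -> simple_sq As U V -> inS U V i -> rl i d ->
  (d.+1 < L)%N ->
  exists X W i2, [/\ simple_sq As X W, inS X W i2, rl i2 d.+1 &
                     rad_points As R L U V X W].
Proof.
move=> rig sUV hUV hd dL.
have [e0 e1 l0 l1 l2] := ar4 dL.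
set J := (L - d.+2)%N in e0 e1.
have E0 : (R d == T J.+2)%MS by rewrite -e0; exact: rig.
have E1 : (R d.+1 == T J.+1)%MS by rewrite -e1; exact: rig.
have E2 : (R d.+2 == T J)%MS by exact: rig.
have hs : sl i J.+1 by exact: inS_eqP E1 E0 hd.
have [K [sK kT hK]] := soc_cover hs.
have /simpleP[sT1 sK' tk nkt HK] := sK.
have [Y [[sY [yk nyT]] minY]] := ex_min
  (P := fun S => sm S /\ (S <= K)%MS /\ ~~ (S <= T J.+1)%MS)
  (conj sK' (conj (submx_refl K) nkt)).
set W := (Y :&: T J.+1)%MS.
have sW : sm W by exact: smI.
have wy : (W <= Y)%MS by exact: capmxSl.
have sWY : simple_sq As W Y.
  apply: simpleI => //; first by apply: contra nyT; rewrite sub_capmx => /andP[].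
  move=> S sS ws sy; case: (boolP (S <= T J.+1)%MS) => h.
    by left; rewrite sub_capmx sy h.
  by right; apply: (minY S (conj sS (conj (submx_trans sy yk) h)) sy).
have kyt : (K <= Y + T J.+1)%MS.
  case: (HK (Y + T J.+1)%MS (smD sY sT1) (addsmxSr _ _)) => [|h|//].
    by rewrite addsmx_sub yk tk.
  by case/negP: nyT; apply: submx_trans h; exact: addsmxSl.
have iso1 : iso_sq As (T J.+1) K W Y.
  by apply: iso_sym => //; apply: iso_id => //; exact: capmxSr.
have [_ hWY] := transfer sK hK sW sY wy iso1.
have nWT : ~~ (W <= T J)%MS.
  apply/negP => wt.
  have sYT : simple_sq As (Y :&: T J)%MS Y.
    apply: simple_eq sWY; last exact: eqmx_refl.
    apply/andP; split; first by rewrite sub_capmx wy wt.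
    by apply: capmxS => //; exact: TS.
  have := socP (simple_shift sYT (smT J)); rewrite addsmx_sub => /andP[h _].
  by rewrite h in nyT.
have nWWT : ~~ (W <= W :&: T J)%MS.
  by apply: contra nWT; rewrite sub_capmx => /andP[].
have [X [sX wtx sXW]] := max_simple (smI sW (smT J)) sW (capmxSl _ _) nWWT.
have /simpleP[_ _ xw nwx _] := sXW.
have [i2 hXW] := class_ex sXW.
have hr2 : rl i2 d.+1.
  apply: inS_eqP (eqmsC E2) (eqmsC E1) _.
  apply: (inS_capY (Y := W)) (smT _) (smT _) sW (TS _) _.
  have ea : (W :&: T J == T J :&: W)%MS by ms.
  have eb : (W == T J.+1 :&: W)%MS by apply/andP; split; rewrite /W; ms.
  exact: inS_eqP ea eb (inS_lo wtx hXW).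
exists X, W, i2; split => //.
exists X, W, Y; split.
- by rewrite sX sW sY xw wy.
- exact: iso_refl.
- exact: cls_iso sWY sUV hWY hUV.
- move=> [W' [sW' /andP[xw' w'y] w'w yw']].
  case: (boolP (W' <= T J.+1)%MS) => h.
    have w'W : (W' <= W)%MS by rewrite sub_capmx w'y h.
    have : (W' <= X)%MS by apply: submx_trans w'w; rewrite sub_capmx submx_refl w'W.
    move=> w'x; case/negP: nyT; apply: submx_trans yw' _; rewrite addsmx_sub.
    apply/andP; split; last exact: capmxSr.
    exact: submx_trans w'x (submx_trans xw (capmxSr _ _)).
  have := minY W' (conj sW' (conj (submx_trans w'y yk) h)) w'y => yw.
  case/negP: nwx; apply: submx_trans w'w; rewrite sub_capmx submx_refl andbT.
  exact: submx_trans wy yw.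
- have Hlh t : [/\ sm (R t.+1), sm (R t) & (R t.+1 <= R t)%MS].
    by split; [exact: smR | exact: smR | exact: RS].
  have Hu t t' j : inS (R t.+1) (R t) j -> inS (R t'.+1) (R t') j -> t = t'.
    by move=> h1 h2; exact: rl_uniq h1 h2.
  have Hc j : inS X Y j -> exists2 t, (t < L)%N & inS (R t.+1 :&: Y + X)%MS (R t :&: Y + X)%MS j.
    by move=> hj; apply: rad_cov => //; exact: submx_trans xw wy.
  have nab : d != d.+1 by rewrite neq_ltn ltnSn.
  exact: (count2 (lo := fun t => R t.+1) (hi := R) Hlh Hu Hc sX sW sY xw wy sXW sWY hXW hWY (ltnW dL) dL nab hd hr2).
Qed.


Lemma step_soc U V i j : rigid R T L -> simple_sq As U V -> inS U V i -> sl i j ->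
  (j.+1 < L)%N ->
  exists W Y i3, [/\ simple_sq As W Y, inS W Y i3, sl i3 j.+1 &
                     soc_points As T L W Y U V].
Proof.
move=> rig sUV hUV hj jL.
have [e0 e1 e2 l0 [l1 l2 l3]] := ar5 jL.
set D := (L - j.+2)%N in e0 e1 e2 l0 l1 l2 l3.
have E0 : (R D == T j.+2)%MS by rewrite -e0; exact: rig.
have E1 : (R D.+1 == T j.+1)%MS by rewrite -e1; exact: rig.
have E2 : (R D.+2 == T j)%MS by rewrite -e2; exact: rig.
have hr : rl i D.+1 by exact: inS_eqP (eqmsC E2) (eqmsC E1) hj.
have [Q [sQ rq hQ]] := rad_cover hr.
have /simpleP[sQ' sR1 qr nrq HQ] := sQ.
have [X [[sX [qx nrx]] maxX]] := ex_max
  (P := fun S => sm S /\ (Q <= S)%MS /\ ~~ (R D.+1 <= S)%MS)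
  (conj sQ' (conj (submx_refl Q) nrq)).
set W := (X + R D.+1)%MS.
have sW : sm W by exact: smD.
have xw : (X <= W)%MS by exact: addsmxSl.
have rxq : (R D.+1 :&: X <= Q)%MS.
  case: (HQ (R D.+1 :&: X)%MS (smI sR1 sX)) => [||//|h].
  - by rewrite sub_capmx qr qx.
  - exact: capmxSl.
  by case/negP: nrx; apply: submx_trans h (capmxSr _ _).
have sXW : simple_sq As X W.
  have h1 : simple_sq As (R D.+1 :&: X)%MS (R D.+1).
    apply: simple_eq sQ; last exact: eqmx_refl.
    by apply/andP; split; [rewrite sub_capmx qr qx | exact: rxq].
  apply: simple_eq (simple_shift h1 sX); first exact: eqmx_refl.
  by rewrite /W; ms.
have iso1 : iso_sq As Q (R D.+1) X W.
  apply: iso_id => //; first exact: addsmxSr.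
  by rewrite /W addsmxC submx_refl.
have [_ hXW] := transfer sQ hQ sX sW xw iso1.
have nRW : ~~ (R D <= W)%MS.
  apply/negP => rw.
  case: (sub_simple sXW (smR D) rw) => h.
    by case/negP: nrx; exact: submx_trans (RS _) h.
  by case/negP: nrx; exact: submx_trans (radP h) (capmxSr _ _).
have nWW : ~~ (W + R D <= W)%MS.
  by apply: contra nRW; rewrite addsmx_sub => /andP[].
have [Y [sY yb sWY]] := min_simple sW (smD sW (smR D)) (addsmxSl _ _) nWW.
have /simpleP[_ _ wy nyw _] := sWY.
have [i3 hWY] := class_ex sWY.
have hs3 : sl i3 j.+1.
  apply: inS_eqP E1 E0 _.
  apply: (inS_addX (X := W)) (smR _) (smR _) sW (RS _) _.
  have ea : (W == R D.+1 + W)%MS by apply/andP; split; rewrite /W; ms.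
  have eb : (W + R D == R D + W)%MS by ms.
  exact: inS_eqP ea eb (inS_hi yb hWY).
exists W, Y, i3; split => //.
exists X, W, Y; split.
- by rewrite sX sW sY xw wy.
- exact: cls_iso sXW sUV hXW hUV.
- exact: iso_refl.
- move=> [W' [sW' /andP[xw' w'y] w'w yw']].
  have /simpleP[_ _ _ nwx _] := sXW.
  case: (boolP (R D.+1 <= W')%MS) => h.
    case/negP: nwx; apply: submx_trans w'w; rewrite sub_capmx submx_refl andbT.
    by rewrite /W addsmx_sub xw' h.
  have := maxX W' (conj sW' (conj (submx_trans qx xw') h)) xw' => w'x.
  case/negP: nyw; apply: submx_trans yw' _; rewrite addsmx_sub submx_refl andbT.
  exact: submx_trans w'x xw.
- have Hlh t : [/\ sm (T t), sm (T t.+1) & (T t <= T t.+1)%MS].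
    by split; [exact: smT | exact: smT | exact: TS].
  have Hu t t' j0 : inS (T t) (T t.+1) j0 -> inS (T t') (T t'.+1) j0 -> t = t'.
    by move=> h1 h2; exact: sl_uniq h1 h2.
  have Hc j0 : inS X Y j0 -> exists2 t, (t < L)%N & inS (T t :&: Y + X)%MS (T t.+1 :&: Y + X)%MS j0.
    by move=> h0; apply: soc_cov => //; exact: submx_trans xw wy.
  have nab : j.+1 != j by rewrite neq_ltn ltnSn orbT.
  exact: (count2 (lo := T) (hi := fun t => T t.+1) Hlh Hu Hc sX sW sY xw wy sXW sWY hXW hWY jL (ltnW jL) nab hs3 hj).
Qed.


Lemma path_rad (rig : rigid R T L) m : forall U V i d, simple_sq As U V -> inS U V i ->
  rl i d -> (d + m < L)%N ->
  exists p : nat -> 'M[F]_n * 'M[F]_n,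
    ext_path As (rad_points As R L) m p /\ p 0%N = (U, V).
Proof.
elim: m => [|m IH] U V i d sUV hUV hd dm.
  exists (fun _ => (U, V)); split => //; split => //= k _; exact: sUV.
have dL : (d.+1 < L)%N by move: dm; rewrite addnS; apply: leq_ltn_trans; rewrite ltnS leq_addr.
have [X [W [i2 [sXW hXW hr2 pts]]]] := step_rad rig sUV hUV hd dL.
have dm' : (d.+1 + m < L)%N by rewrite addSn -addnS.
have [p' [[Hs Hp] p0]] := IH X W i2 d.+1 sXW hXW hr2 dm'.
exists (fun k => if k is k'.+1 then p' k' else (U, V)); split => //; split.
  by case=> [_|k km] //=; apply: Hs.
case=> [_|k km] /=; first by rewrite p0.
exact: Hp.
Qed.

Lemma path_soc (rig : rigid R T L) m : forall U V i j, simple_sq As U V -> inS U V i ->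
  sl i j -> (j + m < L)%N ->
  exists p : nat -> 'M[F]_n * 'M[F]_n,
    ext_path As (soc_points As T L) m p /\ p m = (U, V).
Proof.
elim: m => [|m IH] U V i j sUV hUV hj jm.
  exists (fun _ => (U, V)); split => //; split => //= k _; exact: sUV.
have jL : (j.+1 < L)%N by move: jm; rewrite addnS; apply: leq_ltn_trans; rewrite ltnS leq_addr.
have [W [Y [i3 [sWY hWY hs3 pts]]]] := step_soc rig sUV hUV hj jL.
have jm' : (j.+1 + m < L)%N by rewrite addSn -addnS.
have [p' [[Hs Hp] pm]] := IH W Y i3 j.+1 sWY hWY hs3 jm'.
exists (fun k => if k == m.+1 then (U, V) else p' k); split; last by rewrite eqxx.
split.
  move=> k km /=; case: eqP => [_|ne]; first exact: sUV.
  by apply: Hs; move: km; rewrite leq_eqVlt (negbTE (introN eqP ne)).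
move=> k km /=; rewrite (ltn_eqF km) eqSS.
case: eqP => [->|ne]; first by rewrite pm; exact: pts.
by apply: Hp; rewrite ltn_neqAle (introN eqP ne) -ltnS.
Qed.

Lemma ar6 d : (d < L)%N -> (d + (L - 1 - d) < L)%N.
Proof. lia. Qed.

Lemma main_in :
  (rigid R T L <->
     forall U V : 'M[F]_n, simple_sq As U V ->
     forall d, constituent As (R d.+1) (R d) U V ->
     exists p : nat -> 'M[F]_n * 'M[F]_n,
       ext_path As (rad_points As R L) (L - 1 - d) p /\
       iso_sq As (p 0%N).1 (p 0%N).2 U V) /\
  (rigid R T L <->
     forall U V : 'M[F]_n, simple_sq As U V ->
     forall d, constituent As (T d) (T d.+1) U V ->
     exists p : nat -> 'M[F]_n * 'M[F]_n,
       ext_path As (soc_points As T L) (L - 1 - d) p /\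
       iso_sq As (p (L - 1 - d)%N).1 (p (L - 1 - d)%N).2 U V).
Proof.
split; split; [|exact: rev_rad| |exact: rev_soc].
- move=> rig U V sUV d cst.
  have [i hi] := class_ex sUV.
  have hd : rl i d := inS_of_const sUV hi cst.
  have [p [hp p0]] := path_rad rig sUV hi hd (ar6 (rl_lt hd)).
  by exists p; split => //; rewrite p0; exact: iso_refl.
- move=> rig U V sUV d cst.
  have [i hi] := class_ex sUV.
  have hd : sl i d := inS_of_const sUV hi cst.
  have [p [hp pm]] := path_soc rig sUV hi hd (ar6 (sl_lt hd)).
  by exists p; split => //; rewrite pm; exact: iso_refl.
Qed.

End Comp.

Theorem proposition4p6 (F : fieldType) (n : nat) (As : seq 'M[F]_n)
    (R T : nat -> 'M[F]_n) (L : nat) :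
  mult_free As -> rad_filt As R -> soc_filt As T -> loewy_length R L ->
  (rigid R T L <->
     forall U V : 'M[F]_n, simple_sq As U V ->
     forall d, constituent As (R d.+1) (R d) U V ->
     exists p : nat -> 'M[F]_n * 'M[F]_n,
       ext_path As (rad_points As R L) (L - 1 - d) p /\
       iso_sq As (p 0%N).1 (p 0%N).2 U V) /\
  (rigid R T L <->
     forall U V : 'M[F]_n, simple_sq As U V ->
     forall d, constituent As (T d) (T d.+1) U V ->
     exists p : nat -> 'M[F]_n * 'M[F]_n,
       ext_path As (soc_points As T L) (L - 1 - d) p /\
       iso_sq As (p (L - 1 - d)%N).1 (p (L - 1 - d)%N).2 U V).
Proof.
move=> [len [c [c0 clen cs cmf]]] Rf Tf LL.
exact: (main_in c0 clen cs cmf Rf Tf LL).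
Qed.
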